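(* For every $\epsilon>0$ there exists $n_0(\epsilon)$ such that for every integer $n>n_0(\epsilon)$ there exists a rainbow set $R\subseteq\mathbb{F}_2^n$ with $|R|\ge\left(\frac{1}{\sqrt 2}-\epsilon\right)\sqrt n$.
   Context: For $x,y\in\mathbb{F}_2^n$, the Hamming distance is $d_H(x,y)=\#\{i:x_i\neq y_i\}$. A set $R\subseteq\mathbb{F}_2^n$ is called rainbow if the $\binom{|R|}{2}$ Hamming distances $d_H(x,y)$ over unordered pairs of distinct points $x,y\in R$ are pairwise distinct. *)

(* Defs.v *)
From mathcomp Require Import all_boot.
From Stdlib Require Import Reals.
Set Implicit Arguments. Unset Strict Implicit. Unset Printing Implicit Defensive.

Definition F2vec (n : nat) := {ffun 'I_n -> bool}.

Definition hamming (n : nat) (x y : F2vec n) : nat := #|[set i | x i != y i]|.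

(* A set is rainbow if the distances over unordered pairs of distinct points
   are pairwise distinct: equal distances force the same unordered pair. *)
Definition rainbow (n : nat) (R : {set F2vec n}) : Prop :=
  forall x y x' y', x \in R -> y \in R -> x' \in R -> y' \in R ->
    x != y -> x' != y' -> hamming x y = hamming x' y' ->
    (x = x' /\ y = y') \/ (x = y' /\ y = x').

(* Main.v *)
Require Import Defs.
From mathcomp Require Import all_boot zify.
Lemma count_int lo hi n : lo <= hi ->
  count (fun t => lo <= t < hi) (iota 0 n) = minn hi n - minn lo n.
Proof.
move=> h; elim: n => [|n IH]; first by rewrite /= !minn0.
rewrite -addn1 iotaD count_cat IH /= addn0.
case: (leqP lo n) => a; case: (ltnP n hi) => b /=; lia.
Qed.

Lemma card_ordP n (P : pred nat) : #|[set t : 'I_n | P t]| = count P (iota 0 n).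
Proof.
rewrite cardsE cardE -(size_map val) /enum_mem -enumT /=.
rewrite -filter_map val_enum_ord size_filter //.
Qed.

Lemma key (ai aj bi ei bj ej t : nat): ai <= aj -> aj <= bi -> bi <= ei -> ei <= bj -> bj <= ej ->
 (((t < ai) || (bi <= t < ei)) != ((t < aj) || (bj <= t < ej))) =
 [|| (ai <= t < aj), (bi <= t < ei) | (bj <= t < ej)].
Proof.
move=> *.
case: (ltnP t ai) => ?; case: (ltnP t aj) => ?; case: (leqP bi t) => ?;
case: (ltnP t ei) => ?; case: (leqP bj t) => ?; case: (ltnP t ej) => ? /=; lia.
Qed.

Lemma count3 (ai aj bi ei bj ej n : nat): ai <= aj -> aj <= bi -> bi <= ei -> ei <= bj -> bj <= ej -> ej <= n ->
 count (fun t => [|| (ai <= t < aj), (bi <= t < ei) | (bj <= t < ej)]) (iota 0 n)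
 = (aj - ai) + (ei - bi) + (ej - bj).
Proof.
move=> *.
have e1 := count_predUI (fun t => ai <= t < aj) (predU (fun t => bi <= t < ei) (fun t => bj <= t < ej)) (iota 0 n).
have e2 := count_predUI (fun t => bi <= t < ei) (fun t => bj <= t < ej) (iota 0 n).
have z1 : count (predI (fun t => ai <= t < aj) (predU (fun t => bi <= t < ei) (fun t => bj <= t < ej))) (iota 0 n) = 0.
  rewrite (eq_count (a2 := pred0)) ?count_pred0 // => t /=; apply/negbTE/negP; lia.
have z2 : count (predI (fun t => bi <= t < ei) (fun t => bj <= t < ej)) (iota 0 n) = 0.
  rewrite (eq_count (a2 := pred0)) ?count_pred0 // => t /=; apply/negbTE/negP; lia.
rewrite z1 addn0 in e1; rewrite z2 addn0 in e2.
rewrite (eq_count (a2 := predU (fun t => ai <= t < aj) (predU (fun t => bi <= t < ei) (fun t => bj <= t < ej)))) //.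
rewrite e1 e2 !count_int //; lia.
Qed.
Lemma inj_ord (m i j i' j' : nat) : i < j -> j <= 2*m -> i' < j' -> j' <= 2*m ->
  2*m*(j-i) + i + j = 2*m*(j'-i') + i' + j' -> i = i' /\ j = j'.
Proof.
move=> h1 h2 h3 h4.
wlog le : i j i' j' h1 h2 h3 h4 / j - i <= j' - i'.
  move=> W E; case: (leqP (j-i) (j'-i')) => H; first exact: W.
  by have [-> ->] := W i' j' i j h3 h4 h1 h2 (ltnW H) (esym E).
move=> E.
have [D' HD'] : exists d, j' - i' = (j - i) + d by exists ((j'-i') - (j-i)); lia.
rewrite HD' mulnDr in E.
case: D' HD' E => [|[|d]] HD' E.
- lia.
- lia.
- have : 2*m*(d.+2) = 2*m*d + 4*m by rewrite mulnC; lia.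
  lia.
Qed.

Fixpoint tri (i : nat) : nat := if i is i'.+1 then tri i' + i' else 0.

Lemma tri_mono i j : i <= j -> tri i <= tri j.
Proof.
move=> h; elim: j h => [|j IH]; first by rewrite leqn0 => /eqP ->.
rewrite leq_eqVlt => /orP[/eqP -> //|h] /=. have := IH h. lia.
Qed.

Lemma tri_step i j : i < j -> tri i + i <= tri j.
Proof. by move=> h; have := tri_mono _ _ h. Qed.

Lemma tri_top m : tri (2*m).+1 = (2*m).+1 * m.
Proof.
have H : forall k, 2 * tri k = k * k.-1.
  elim=> [//|k IH] /=. case: k IH => [//|k] /= IH. nia.
have := H (2*m).+1. simpl. nia.
Qed.

Definition vec (m n i : nat) : F2vec n :=
  [ffun t : 'I_n => (t < 2*m*i) || (4*m*m + tri i <= t < 4*m*m + tri i + i)].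

Lemma ham_lt m n i j : 4 <= m -> 7*m*m <= n -> i < j -> j <= 2*m ->
  hamming (vec m n i) (vec m n j) = 2*m*(j-i) + i + j.
Proof.
move=> hm hn hij hj.
rewrite /hamming.
have -> : [set t | vec m n i t != vec m n j t] =
  [set t : 'I_n | (fun t => [|| (2*m*i <= t < 2*m*j),
     (4*m*m + tri i <= t < 4*m*m + tri i + i) |
     (4*m*m + tri j <= t < 4*m*m + tri j + j)]) (nat_of_ord t)].
  apply/setP => t; rewrite !inE !ffunE key //.
  - by rewrite leq_mul2l ltnW ?orbT.
  - have : 2*m*j <= 2*m*(2*m) by rewrite leq_mul2l hj orbT.
    lia.
  - lia.
  - have := tri_step _ _ hij. lia.
  - lia.
rewrite (card_ordP n (fun t => [|| (2*m*i <= t < 2*m*j), (4*m*m + tri i <= t < 4*m*m + tri i + i) | (4*m*m + tri j <= t < 4*m*m + tri j + j)])) count3.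
- have -> : 2*m*j - 2*m*i = 2*m*(j-i) by rewrite mulnBr.
  lia.
- by rewrite leq_mul2l ltnW ?orbT.
- have : 2*m*j <= 2*m*(2*m) by rewrite leq_mul2l hj orbT.
  lia.
- lia.
- have := tri_step _ _ hij. lia.
- lia.
- have := tri_step _ _ (hj : j < (2*m).+1). have := tri_top m. nia.
Qed.

Lemma ham_sym n (x y : F2vec n) : hamming x y = hamming y x.
Proof. by rewrite /hamming; apply: eq_card => t; rewrite !inE eq_sym. Qed.

Lemma ham_self n (x : F2vec n) : hamming x x = 0.
Proof. rewrite /hamming; apply/eqP; rewrite cards_eq0; apply/eqP/setP => t; by rewrite !inE eqxx. Qed.

Lemma ham_inj m n a b a' b' : 4 <= m -> 7*m*m <= n -> a <= 2*m -> b <= 2*m -> a' <= 2*m -> b' <= 2*m ->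
  a != b -> a' != b' ->
  hamming (vec m n a) (vec m n b) = hamming (vec m n a') (vec m n b') ->
  (a = a' /\ b = b') \/ (a = b' /\ b = a').
Proof.
move=> hm hn ha hb ha' hb' nab nab'.
case: (ltngtP a b) nab => // hab _; case: (ltngtP a' b') nab' => // hab' _.
- rewrite !ham_lt // => E.
  by have [] := inj_ord _ _ _ _ _ hab hb hab' hb' E => -> ->; auto.
- rewrite ham_lt // [X in _ = X]ham_sym ham_lt // => E.
  by have [] := inj_ord _ _ _ _ _ hab hb hab' ha' E => -> ->; auto.
- rewrite ham_sym ham_lt // [X in _ = X]ham_lt // => E.
  by have [] := inj_ord _ _ _ _ _ hab ha hab' hb' E => -> ->; auto.
- rewrite ham_sym ham_lt // [X in _ = X]ham_sym ham_lt // => E.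
  by have [] := inj_ord _ _ _ _ _ hab ha hab' ha' E => -> ->; auto.
Qed.

From Stdlib Require Import Reals Lra.

Lemma real_bound (eps : R) (n m : nat) : (0 < eps)%R -> n <= 2*(2*m+1)*(2*m+1) ->
  ((1 / sqrt 2 - eps) * sqrt (INR n) <= INR (2*m+1))%R.
Proof.
move=> he hn.
set K := INR (2*m+1).
have K0 : (0 <= K)%R by apply: pos_INR.
have s2 : (0 < sqrt 2)%R by apply: sqrt_lt_R0; lra.
have sn : (0 <= sqrt (INR n))%R by apply: sqrt_pos.
have hnR : (INR n <= 2 * (K * K))%R.
  have := le_INR _ _ (elimT leP hn). rewrite !mult_INR /K. 
  have -> : INR 2 = 2%R by []. lra.
have : (sqrt (INR n) <= sqrt 2 * K)%R.
  rewrite -(sqrt_square K) // -sqrt_mult; try lra; try nra.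
  apply: sqrt_le_1_alt; lra.
move=> h.
have : (1 / sqrt 2 * sqrt (INR n) <= K)%R.
  apply (Rmult_le_reg_l (sqrt 2)) => //.
  have -> : (sqrt 2 * (1 / sqrt 2 * sqrt (INR n)) = sqrt (INR n))%R by field; lra.
  lra.
move=> h2.
have : (eps * sqrt (INR n) >= 0)%R by apply: Rle_ge; apply: Rmult_le_pos; lra.
lra.
Qed.

Theorem theorem1p5 :
  forall eps : R, (0 < eps)%R ->
  exists n0 : nat, forall n : nat, (n0 < n)%nat ->
    exists S : {set F2vec n}, rainbow S /\
      ((1 / sqrt 2 - eps) * sqrt (INR n) <= INR #|S|)%R.
Proof.
move=> eps heps; exists 2000 => n hn.
pose m := Nat.sqrt (n %/ 7).
have [s1 s2] := Nat.sqrt_spec' (n %/ 7).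
rewrite -/m in s1 s2. clearbody m.
have e1 : m * m <= n %/ 7 by apply/leP.
have e2 : n %/ 7 < m.+1 * m.+1 by apply/ltP.
have hm9 : 7*m*m <= n by lia.
have hn9 : n < 7*m.+1*m.+1 by lia.
have hm : 11 <= m by nia.
have hm4 : 4 <= m by lia.
pose f := fun i : 'I_(2*m+1) => vec m n i.
have lt2 (i : 'I_(2*m+1)) : (i : nat) <= 2*m by have := ltn_ord i; lia.
have finj : injective f.
  move=> i j E; apply: val_inj => /=; case: (ltngtP i j) => // h.
  - have := ham_lt _ _ _ _ hm4 hm9 h (lt2 j); rewrite /f in E.
    rewrite -E ham_self. lia.
  - have := ham_lt _ _ _ _ hm4 hm9 h (lt2 i); rewrite /f in E.
    rewrite E ham_self; lia.
exists (f @: setT); split.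
  move=> x y x' y' /imsetP[a _ ->] /imsetP[b _ ->] /imsetP[a' _ ->] /imsetP[b' _ ->] nxy nxy' E.
  have nab : (a : nat) != b by apply: contra nxy => /eqP /val_inj ->.
  have nab' : (a' : nat) != b' by apply: contra nxy' => /eqP /val_inj ->.
  case: (ham_inj _ _ _ _ _ _ hm4 hm9 (lt2 a) (lt2 b) (lt2 a') (lt2 b') nab nab' E) => [[h1 h2]|[h1 h2]].
  - by left; rewrite (val_inj h1) (val_inj h2).
  - by right; rewrite (val_inj h1) (val_inj h2).
rewrite card_imset // cardsT card_ord.
have : 11*m <= m*m by rewrite leq_mul2r hm orbT.
move=> h11; apply: real_bound => //.
have q1 : m.+1 * m.+1 = m*m + 2*m + 1 by nia.
have q2 : 2*(2*m+1)*(2*m+1) = 8*(m*m) + 8*m + 2 by nia.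
have q3 : 7*m.+1*m.+1 = 7*(m.+1 * m.+1) by nia.
lia.
Qed.
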